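(* Let $f:\mathbb{R}^d\to\mathbb{R}$ be $\beta$-smooth with minimum value $f^\star$. Then the iterates of AdaSGD (as in the context) satisfy $$\sum_{t=1}^T\nabla f(w_t)\cdot g_t\le\frac{\gamma\Delta_1}{\eta}+\Big(\frac{2\bar\Delta_T}{\eta}+\eta\beta\Big)\sqrt{\sum_{t=1}^T\|g_t\|^2},$$ where $\Delta_1=f(w_1)-f^\star$ and $\bar\Delta_T=\max_{t\le T}f(w_t)-f^\star$.
   Context: $\|\cdot\|$ is the Euclidean norm. $\beta$-smooth: $\|\nabla f(x)-\nabla f(y)\|\le\beta\|x-y\|$. AdaSGD with parameters $\eta,\gamma>0$: arbitrary $w_1\in\mathbb{R}^d$; for $t=1,\dots,T$, $g_t$ is the stochastic gradient returned by an oracle at $w_t$, $\eta_t=\eta/\sqrt{\gamma^2+\sum_{s=1}^t\|g_s\|^2}$, and $w_{t+1}=w_t-\eta_tg_t$. *)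

(* Defs.v *)
From HB Require Import structures.
From mathcomp Require Import all_boot all_order all_algebra.
From mathcomp Require Import all_classical all_reals all_analysis.
Set Implicit Arguments. Unset Strict Implicit. Unset Printing Implicit Defensive.
Import Order.TTheory GRing.Theory Num.Theory.
Import numFieldNormedType.Exports.
Local Open Scope ring_scope.

Definition dotp (R : realType) (d : nat) (u v : 'rV[R]_d) : R :=
  \sum_(i < d) u ord0 i * v ord0 i.

Definition enorm (R : realType) (d : nat) (v : 'rV[R]_d) : R :=
  Num.sqrt (dotp v v).

(* AdaSGD step size eta_t = eta / sqrt(gamma^2 + sum_{s=1}^t ||g_s||^2),
   for t >= 1; g is indexed from 1 (g 0 is never used). *)
Definition adasgd_step (R : realType) (d : nat) (eta gamma : R)
    (g : nat -> 'rV[R]_d) (t : nat) : R :=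
  eta / Num.sqrt (gamma ^+ 2 + \sum_(1 <= s < t.+1) enorm (g s) ^+ 2).

(* adasgd_iter k = w_{k+1}:  w_1 = w1,  w_{t+1} = w_t - eta_t g_t. *)
Fixpoint adasgd_iter (R : realType) (d : nat) (eta gamma : R)
    (w1 : 'rV[R]_d) (g : nat -> 'rV[R]_d) (k : nat) : 'rV[R]_d :=
  match k with
  | 0 => w1
  | k'.+1 => adasgd_iter eta gamma w1 g k'
             - adasgd_step eta gamma g k'.+1 *: g k'.+1
  end.

(* The AdaSGD iterate w_t (meaningful for t >= 1). *)
Definition adasgd_w (R : realType) (d : nat) (eta gamma : R)
    (w1 : 'rV[R]_d) (g : nat -> 'rV[R]_d) (t : nat) : 'rV[R]_d :=
  adasgd_iter eta gamma w1 g t.-1.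

(* Main.v *)
Require Import Defs.
From HB Require Import structures.
From mathcomp Require Import all_boot all_order all_algebra.
From mathcomp Require Import all_classical all_reals all_analysis.
From mathcomp Require Import ring lra.
Import Order.TTheory GRing.Theory Num.Theory.
Import numFieldNormedType.Exports.
Local Open Scope ring_scope.

Section S.
Variables (R : realType) (d : nat).

Lemma line_derive (f : 'rV[R]_d -> R) (df : 'rV[R]_d -> 'rV[R]_d -> R)
  (hgrad : forall x v : 'rV[R]_d, is_derive x v f (df x v)) (x v : 'rV[R]_d) (s : R) :
  is_derive s 1 (fun s : R => f (s *: v + x)) (df (s *: v + x) v).
Proof.
have [H1 H2] := hgrad (s *: v + x) v.
have E : (fun h : R => h^-1 *: (((fun s : R => f (s *: v + x)) \o shift s) (h *: 1) - f (s *: v + x)))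
  = (fun h : R => h^-1 *: ((f \o shift (s *: v + x)) (h *: v) - f (s *: v + x))).
  apply: funext => h /=; congr (_ *: (f _ - _)).
  by rewrite scalerDl addrA [h *: 1]mulr1.
split; first by rewrite /derivable E.
by rewrite /derive E.
Qed.

Lemma dotpBl (u w v : 'rV[R]_d) : dotp (u - w) v = dotp u v - dotp w v.
Proof. by rewrite /dotp -sumrB; apply: eq_bigr => i _; rewrite !mxE mulrBl. Qed.

Lemma dotpZl (a : R) (u v : 'rV[R]_d) : dotp (a *: u) v = a * dotp u v.
Proof. by rewrite /dotp mulr_sumr; apply: eq_bigr => i _; rewrite !mxE mulrA. Qed.

Lemma dotpC (u v : 'rV[R]_d) : dotp u v = dotp v u.
Proof. by apply: eq_bigr => i _; rewrite mulrC. Qed.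

Lemma dotpBr (u w v : 'rV[R]_d) : dotp v (u - w) = dotp v u - dotp v w.
Proof. by rewrite dotpC dotpBl !(dotpC v). Qed.

Lemma dotpZr (a : R) (u v : 'rV[R]_d) : dotp v (a *: u) = a * dotp v u.
Proof. by rewrite dotpC dotpZl dotpC. Qed.

Lemma dotp_ge0 (u : 'rV[R]_d) : 0 <= dotp u u.
Proof. by apply: sumr_ge0 => i _; rewrite -expr2 sqr_ge0. Qed.

Lemma enorm_ge0 (u : 'rV[R]_d) : 0 <= enorm u.
Proof. exact: sqrtr_ge0. Qed.

Lemma enorm_sq (u : 'rV[R]_d) : enorm u ^+ 2 = dotp u u.
Proof. by rewrite sqr_sqrtr // dotp_ge0. Qed.

Lemma dotp0 (u v : 'rV[R]_d) : dotp u u = 0 -> dotp u v = 0.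
Proof.
move=> /eqP; rewrite psumr_eq0; last by move=> i _; rewrite -expr2 sqr_ge0.
move=> /allP H; apply: big1 => i _.
have := H i (mem_index_enum _); rewrite mulf_eq0 orbb => /eqP ->.
by rewrite mul0r.
Qed.

Lemma cauchy_schwarz (u v : 'rV[R]_d) : dotp u v <= enorm u * enorm v.
Proof.
set a := enorm u; set b := enorm v.
have ha : 0 <= a := enorm_ge0 u. have hb : 0 <= b := enorm_ge0 v.
have ea : a ^+ 2 = dotp u u := enorm_sq u.
have eb : b ^+ 2 = dotp v v := enorm_sq v.
have [a0|apos] := eqVneq a 0.
  by rewrite dotp0 ?mulr_ge0 // -ea a0 expr0n.
have [b0|bpos] := eqVneq b 0.
  by rewrite dotpC dotp0 ?mulr_ge0 // -eb b0 expr0n.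
have H := dotp_ge0 (b *: u - a *: v).
have E : dotp (b *: u - a *: v) (b *: u - a *: v)
   = b^+2 * dotp u u - 2 * a * b * dotp u v + a^+2 * dotp v v.
  rewrite !dotpBl !dotpBr !dotpZl !dotpZr (dotpC v u).
  ring.
rewrite E -ea -eb in H.
have ap : 0 < a by rewrite lt_def apos.
have bp : 0 < b by rewrite lt_def bpos.
have abp : 0 < a * b by rewrite mulr_gt0.
rewrite -subr_ge0.
have : 0 <= (a * b) * (2 * (a * b - dotp u v)) by nra.
rewrite pmulr_rge0 // pmulr_rge0 //.
Qed.


Lemma enormZ (s : R) (v : 'rV[R]_d) : enorm (s *: v) = `|s| * enorm v.
Proof.
by rewrite /enorm dotpZl dotpZr mulrA -expr2 sqrtrM ?sqr_ge0 // sqrtr_sqr.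
Qed.

Lemma descent (f : 'rV[R]_d -> R) (gradf : 'rV[R]_d -> 'rV[R]_d) (beta : R)
  (hgrad : forall x v : 'rV[R]_d, is_derive x v f (dotp (gradf x) v))
  (hsmooth : forall x y : 'rV[R]_d,
      enorm (gradf x - gradf y) <= beta * enorm (x - y))
  (x v : 'rV[R]_d) :
  f (v + x) <= f x + dotp (gradf x) v + beta / 2 * dotp v v.
Proof.
set c := dotp (gradf x) v; set n := dotp v v.
pose p : {poly R} := c *: 'X + (beta / 2 * n) *: 'X^2.
pose phi := (fun s : R => f (s *: v + x)) - horner p.
have dphi (s : R) : is_derive s (1 : R) phi (dotp (gradf (s *: v + x)) v - (deriv p).[s]).
  apply: is_deriveB.
  exact: (line_derive _ (fun a b => dotp (gradf a) b) hgrad).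
have phiE s : phi s = f (s *: v + x) - (c * s + beta / 2 * n * s ^+ 2).
  change (f (s *: v + x) - p.[s] = f (s *: v + x) - (c * s + beta / 2 * n * s ^+ 2)); rewrite /p.
  by rewrite !hornerE.
have dpE s : (deriv p).[s] = c + beta * n * s.
  rewrite /p derivD !derivZ derivX derivXn !hornerE; field. done.
have key : phi 1 <= phi 0.
  apply: (@ler0_derive1_le_cc R phi 0 1).
  - by move=> r _; have [] := dphi r.
  - move=> r; rewrite in_itv /= => /andP[s0 s1].
    rewrite derive1E; have [_ ->] := dphi r; rewrite dpE.
    have h1 : dotp (gradf (r *: v + x)) v - c = dotp (gradf (r *: v + x) - gradf x) v.
      by rewrite dotpBl.
    have h2 := cauchy_schwarz (gradf (r *: v + x) - gradf x) v.
    have h3 := hsmooth (r *: v + x) x.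
    rewrite addrK enormZ (ger0_norm (ltW s0)) in h3.
    have h4 : enorm v ^+ 2 = n := enorm_sq v.
    have h5 := enorm_ge0 v.
    have h6 := enorm_ge0 (gradf (r *: v + x) - gradf x).
    have h7 : 0 <= (beta * (r * enorm v) - enorm (gradf (r *: v + x) - gradf x)) * enorm v.
      by apply: mulr_ge0 => //; rewrite subr_ge0.
    rewrite -h4 in h7 *. nra.
  - exact: (@derivable_within_continuous R R^o phi `[0, 1]%R (fun r _ => @ex_derive _ _ _ _ _ _ _ (dphi r))).
  - by rewrite in_itv /= lexx ler01.
  - by rewrite in_itv /= lexx ler01.
  - exact: ler01.
rewrite !phiE scale1r scale0r add0r expr1n expr0n /= !mulr1 !mulr0 in key.
lra.
Qed.
End S.

Lemma bigmax_ub (R : realType) (x : R) (F : nat -> R) (r : seq nat) :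
  (x <= \big[Num.max/x]_(i <- r) F i) /\
  (forall t, t \in r -> F t <= \big[Num.max/x]_(i <- r) F i).
Proof.
elim: r => [|a r [IH1 IH2]]; first by rewrite big_nil lexx.
rewrite big_cons; split; first by rewrite le_max IH1 orbT.
move=> t; rewrite in_cons => /orP[/eqP ->|tr]; first by rewrite le_max lexx.
by rewrite le_max IH2 ?orbT.
Qed.

Lemma bigmax_lub (R : realType) (x y : R) (F : nat -> R) (r : seq nat) :
  x <= y -> (forall t, t \in r -> F t <= y) -> \big[Num.max/x]_(i <- r) F i <= y.
Proof.
move=> xy; elim: r => [|a r IH] H; first by rewrite big_nil.
rewrite big_cons ge_max H ?mem_head //= IH // => t tr.
by apply: H; rewrite in_cons tr orbT.
Qed.


Theorem lemma1 (R : realType) (d : nat)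
  (f : 'rV[R]_d -> R) (gradf : 'rV[R]_d -> 'rV[R]_d) (beta fstar : R)
  (* gradf is the gradient of f *)
  (hgrad : forall x v : 'rV[R]_d, is_derive x v f (dotp (gradf x) v))
  (* beta-smoothness w.r.t. the Euclidean norm *)
  (hsmooth : forall x y : 'rV[R]_d,
      enorm (gradf x - gradf y) <= beta * enorm (x - y))
  (* fstar is the minimum value of f *)
  (hmin_lb : forall x, fstar <= f x)
  (hmin_att : exists xs, f xs = fstar)
  (eta gamma : R) (heta : 0 < eta) (hgamma : 0 < gamma)
  (w1 : 'rV[R]_d) (g : nat -> 'rV[R]_d) (T : nat) :
  let w := adasgd_w eta gamma w1 g in
  let Delta1 := f (w 1%N) - fstar in
  let DeltaBar := \big[Num.max/f (w 1%N)]_(1 <= t < T.+1) f (w t) - fstar in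
  \sum_(1 <= t < T.+1) dotp (gradf (w t)) (g t)
  <= gamma * Delta1 / eta
     + (2 * DeltaBar / eta + eta * beta)
       * Num.sqrt (\sum_(1 <= t < T.+1) enorm (g t) ^+ 2).
Proof.
cbv zeta; set w := adasgd_w eta gamma w1 g.
pose a t := enorm (g t) ^+ 2.
pose G t := \sum_(1 <= s < t.+1) a s.
pose S t := Num.sqrt (gamma ^+ 2 + G t).
pose M n := \big[Num.max/f (w 1%N)]_(1 <= t < n.+1) f (w t).
pose p t := dotp (gradf (w t)) (g t).
have a_ge0 t : 0 <= a t by rewrite /a sqr_ge0.
have GS k : G k.+1 = G k + a k.+1 by rewrite /G big_nat_recr.
have G0 : G 0%N = 0 by rewrite /G big_geq.
have G_ge0 t : 0 <= G t by apply: sumr_ge0 => i _.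
have S_ge t : gamma <= S t.
  have e : Num.sqrt (gamma ^+ 2) = gamma by rewrite sqrtr_sqr gtr0_norm.
  by rewrite -[X in X <= _]e; apply: ler_wsqrtr; rewrite lerDl.
have S_pos t : 0 < S t by apply: lt_le_trans (S_ge t).
have S_sq t : S t ^+ 2 = gamma ^+ 2 + G t by rewrite sqr_sqrtr // addr_ge0 ?sqr_ge0.
have q_sq t : Num.sqrt (G t) ^+ 2 = G t by rewrite sqr_sqrtr.
have q_ge0 t : 0 <= Num.sqrt (G t) := sqrtr_ge0 _.
have S_geq t : Num.sqrt (G t) <= S t by apply: ler_wsqrtr; rewrite lerDr sqr_ge0.
have S_mono k : S k <= S k.+1 by apply: ler_wsqrtr; rewrite GS lerD2l lerDl.
have q_mono k : Num.sqrt (G k) <= Num.sqrt (G k.+1) by apply: ler_wsqrtr; rewrite GS lerDl.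
have wS k : w k.+2 = w k.+1 - (eta / S k.+1) *: g k.+1 by [].
have M_ub n : f (w 1%N) <= M n /\ (forall t, (1 <= t <= n)%N -> f (w t) <= M n).
  have [h1 h2] := bigmax_ub _ (f (w 1%N)) (fun t => f (w t)) (index_iota 1 n.+1).
  by split => // t ht; apply: h2; rewrite mem_index_iota ltnS.
have M_mono n : M n <= M n.+1.
  apply: bigmax_lub; first by case: (M_ub n.+1).
  move=> t; rewrite mem_index_iota ltnS => ht.
  case: (M_ub n.+1) => _; apply; case/andP: ht => h1 h2; rewrite h1 /=; exact: leq_trans h2 (leqnSn n).
have step k : eta * p k.+1 <= S k.+1 * (f (w k.+1) - f (w k.+2))
    + beta * eta ^+ 2 * (Num.sqrt (G k.+1) - Num.sqrt (G k)).
  set e := eta / S k.+1.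
  have Sp := S_pos k.+1.
  have eS : eta = e * S k.+1 by rewrite /e divfK // gt_eqF.
  have D := descent _ _ _ _ _ hgrad hsmooth (w k.+1) (- (e *: g k.+1)).
  have wE : - (e *: g k.+1) + w k.+1 = w k.+2 by rewrite wS addrC.
  rewrite wE in D.
  rewrite -scaleNr dotpZr dotpZl dotpZr -enorm_sq -/(a k.+1) -/(p k.+1) in D.
  set u := Num.sqrt (G k.+1) in D *; set l := Num.sqrt (G k) in D *.
  have hu : u ^+ 2 = G k + a k.+1 by rewrite /u q_sq GS.
  have hl : l ^+ 2 = G k by rewrite /l q_sq.
  have hul : l <= u := q_mono k.
  have hSu : u <= S k.+1 := S_geq k.+1.
  have hl0 : 0 <= l := q_ge0 k.
  have hA : a k.+1 <= 2 * S k.+1 * (u - l).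
    have h1 : 0 <= (u - l) * (u - l) by rewrite -expr2 sqr_ge0.
    have h2 : 0 <= (S k.+1 - u) * (u - l) by apply: mulr_ge0; rewrite subr_ge0.
    nra.
  have hB : beta * (e ^+ 2 * S k.+1) * (a k.+1 - 2 * S k.+1 * (u - l)) <= 0.
    have [a0|anz] := eqVneq (a k.+1) 0.
      have ul : u = l by rewrite /u /l GS a0 addr0.
      by rewrite a0 ul subrr mulr0 subrr mulr0.
    have b0 : 0 <= beta.
      have hs := hsmooth (g k.+1) 0.
      rewrite subr0 in hs.
      have := le_trans (enorm_ge0 _ _ _) hs.
      have gp : 0 < enorm (g k.+1).
        rewrite lt_def enorm_ge0 andbT; apply: contra anz => /eqP.
        by rewrite /a => ->; rewrite expr0n.
      by rewrite pmulr_lge0.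
    apply: mulr_ge0_le0; last by rewrite subr_le0.
    by rewrite mulr_ge0 // mulr_ge0 // ?sqr_ge0 // ltW.
  have D' := ler_wpM2l (ltW Sp) D.
  rewrite eS.
  nra.
have claim n : eta * \sum_(1 <= t < n.+1) p t <= gamma * (f (w 1%N) - fstar)
    + (M n - fstar) * (S n - gamma) - S n * (f (w n.+1) - fstar)
    + beta * eta ^+ 2 * Num.sqrt (G n).
  elim: n => [|n IH].
    have S0 : S 0%N = gamma by rewrite /S G0 addr0 sqrtr_sqr gtr0_norm.
    rewrite big_geq // G0 sqrtr0 S0 subrr !mulr0.
    lra.
  rewrite big_nat_recr //= mulrDr.
  have hs := step n.
  have [_ hM] := M_ub n.+1.
  have hf : f (w n.+1) <= M n.+1 by apply: hM; rewrite /= leqnn.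
  have h1 : 0 <= (M n.+1 - M n) * (S n - gamma).
    by apply: mulr_ge0; rewrite subr_ge0 // M_mono.
  have h2 : 0 <= (M n.+1 - f (w n.+1)) * (S n.+1 - S n).
    by apply: mulr_ge0; rewrite subr_ge0 // S_mono.
  rewrite -/(p n.+1).
  nra.
change (\sum_(1 <= t < T.+1) p t <= gamma * (f (w 1%N) - fstar) / eta
  + (2 * (M T - fstar) / eta + eta * beta) * Num.sqrt (G T)).
have hc := claim T.
have hfT := hmin_lb (w T.+1).
have hf1 := hmin_lb (w 1%N).
have [hM1 _] := M_ub T.
have hsq : S T - gamma <= Num.sqrt (G T).
  have := S_sq T; have := q_sq T; have := q_ge0 T; have := S_pos T.
  have : 0 <= gamma * Num.sqrt (G T) by rewrite mulr_ge0 // ltW.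
  nra.
have h1 : 0 <= (M T - fstar) * (Num.sqrt (G T) - (S T - gamma)).
  by apply: mulr_ge0; rewrite subr_ge0 // (le_trans hf1).
have h2 : 0 <= S T * (f (w T.+1) - fstar).
  by apply: mulr_ge0; rewrite ?subr_ge0 // ltW.
have h3 : 0 <= (M T - fstar) * Num.sqrt (G T).
  by apply: mulr_ge0; rewrite ?subr_ge0 // (le_trans hf1).
rewrite -(ler_pM2l heta).
have E : eta * (gamma * (f (w 1%N) - fstar) / eta
  + (2 * (M T - fstar) / eta + eta * beta) * Num.sqrt (G T))
  = gamma * (f (w 1%N) - fstar) + 2 * ((M T - fstar) * Num.sqrt (G T))
    + beta * eta ^+ 2 * Num.sqrt (G T).
  by field; rewrite gt_eqF.
rewrite E.
nra.
Qed.
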